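(* Let $D$ be a normalized 2-page book drawing of $K_n$ and $1\le i<j\le n$. Let $k$ be the number of entries of $M(D)$ to the right of $(i,j)$ having the same color as $(i,j)$ plus the number of entries above $(i,j)$ having the same color as $(i,j)$. Then exactly $k$ of the vertices other than $i,j$ lie on one side of the edge $ij$ (i.e., $ij$ is a $k$-edge, where possibly $k>\lfloor n/2\rfloor-1$).
   Context: Normalized 2-page book drawing of $K_n$: vertices $(1,0),\dots,(n,0)$ labelled $1,\dots,n$ left to right; edges $i(i+1)$ on the $x$-axis (spine); edge $1n$ in the upper half-plane; every other edge $ij$ a semicircle over $[i,j]$ in the upper or lower half-plane. Edges on the spine or in the upper half-plane are blue, in the lower half-plane red. $M(D)$ has entries $(i,j)$, $1\le i<j\le n$ (row $i$, column $j$), colored as edge $ij$; entries $(i',j)$ with $i'<i$ are above $(i,j)$, entries $(i,j')$ with $j'>j$ are to its right. For distinct vertices $p,q,r$, $r$ is on the left (right) of $\overrightarrow{pq}$ if the triangle with edges $pq,qr,rp$ traced in order $p,q,r$ is counterclockwise (clockwise); $pq$ is a $k$-edge if exactly $k$ of the other vertices lie on one side. *)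

(* Defs.v *)
From Stdlib Require Import Reals Lra Arith List.
From Coquelicot Require Import Coquelicot.
Open Scope R_scope.

(* A normalized 2-page book drawing of K_n is encoded by
   [up : nat -> nat -> bool]: for 1 <= i < j <= n with j <> i+1,
   [up i j = true] means the edge ij is the upper semicircle, [false] the
   lower one.  Edges i(i+1) lie on the spine regardless of [up]. *)

(* vertical direction of edge {a,b} (a < b): 1 upper, 0 spine, -1 lower *)
Definition edge_sign (up : nat -> nat -> bool) (a b : nat) : R :=
  if Nat.eqb b (S a) then 0 else if up a b then 1 else -1.

Definition sgn_pq (up : nat -> nat -> bool) (p q : nat) : R :=
  edge_sign up (Nat.min p q) (Nat.max p q).

(* Edge pq traced from vertex (p,0) to vertex (q,0), parametrized by
   theta in [0,PI]: the semicircle over [p,q] (or the spine segment when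
   sign = 0) with center m = (p+q)/2 and signed half-length rho = (q-p)/2. *)
Definition arc_x (p q : nat) (t : R) : R :=
  (INR p + INR q) / 2 - ((INR q - INR p) / 2) * cos t.
Definition arc_y (up : nat -> nat -> bool) (p q : nat) (t : R) : R :=
  sgn_pq up p q * Rabs ((INR q - INR p) / 2) * sin t.

(* contribution of the directed edge p -> q to  \oint (x dy - y dx) *)
Definition arc_green (up : nat -> nat -> bool) (p q : nat) : R :=
  RInt (fun t => arc_x p q t * Derive (arc_y up p q) t
                 - arc_y up p q t * Derive (arc_x p q) t) 0 PI.

(* signed area enclosed by the closed curve formed by the edges pq, qr, rp
   traced in order p, q, r (Green's formula); positive iff counterclockwise *)
Definition tri_area (up : nat -> nat -> bool) (p q r : nat) : R :=
  (arc_green up p q + arc_green up q r + arc_green up r p) / 2.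

(* r is on the left (right) of pq: triangle p,q,r counterclockwise (clockwise) *)
Definition leftb (up : nat -> nat -> bool) (p q r : nat) : bool :=
  if Rlt_dec 0 (tri_area up p q r) then true else false.
Definition rightb (up : nat -> nat -> bool) (p q r : nat) : bool :=
  if Rlt_dec (tri_area up p q r) 0 then true else false.

Definition others (n p q : nat) : list nat :=
  filter (fun r => andb (negb (Nat.eqb r p)) (negb (Nat.eqb r q))) (seq 1 n).

Definition is_k_edge (up : nat -> nat -> bool) (n k p q : nat) : Prop :=
  length (filter (leftb up p q) (others n p q)) = k \/
  length (filter (rightb up p q) (others n p q)) = k.

(* colour of edge ab (a<b) = colour of entry (a,b) of M(D): true = blue *)
Definition blue (up : nat -> nat -> bool) (a b : nat) : bool :=
  orb (Nat.eqb b (S a)) (up a b).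

Definition same_color_count (up : nat -> nat -> bool) (n i j : nat) : nat :=
  length (filter (fun j' => Bool.eqb (blue up i j') (blue up i j))
                 (seq (S j) (n - j)))
  + length (filter (fun i' => Bool.eqb (blue up i' j) (blue up i j))
                 (seq 1 (i - 1))).

(* Main.v *)
Require Import Defs.
From Stdlib Require Import Reals Arith List Lra Lia Psatz.
From Coquelicot Require Import Coquelicot.
Open Scope R_scope.

Lemma arc_green_eq up p q :
  arc_green up p q = - PI * (sgn_pq up p q * Rabs ((INR q - INR p)/2)) * ((INR q - INR p)/2).
Proof.
  set (c := sgn_pq up p q * Rabs ((INR q - INR p)/2)).
  set (rho := (INR q - INR p)/2).
  set (m := (INR p + INR q)/2).
  unfold arc_green.
  assert (Hy : forall t, Derive (arc_y up p q) t = c * cos t).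
  { intro t. apply is_derive_unique. unfold arc_y. fold rho c. auto_derive; auto. unfold c, rho, m. ring. }
  assert (Hx : forall t, Derive (arc_x p q) t = rho * sin t).
  { intro t. apply is_derive_unique. unfold arc_x. fold rho m. auto_derive; auto. unfold c, rho, m. ring. }
  rewrite (RInt_ext _ (fun t => c * (m * cos t - rho))).
  2:{ intros t _. rewrite Hx, Hy. unfold arc_x, arc_y. fold rho c m.
      pose proof (sin2_cos2 t) as H'. unfold Rsqr in H'.
      apply Rminus_diag_uniq.
      transitivity (-(c*rho) * (sin t * sin t + cos t * cos t - 1)).
      { unfold c, rho, m. ring. }
      rewrite H'. ring. }
  assert (HI : is_RInt (fun t => c * (m * cos t - rho)) 0 PI
     ((fun t => c * (m * sin t - rho * t)) PI - (fun t => c * (m * sin t - rho * t)) 0)).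
  { apply (is_RInt_derive (fun t => c * (m * sin t - rho * t))).
    - intros t _. auto_derive; auto. ring.
    - intros t _. apply continuity_pt_filterlim. apply derivable_continuous_pt. reg. }
  rewrite (is_RInt_unique _ _ _ _ HI). simpl. rewrite sin_PI, sin_0. ring.
Qed.

Definition G up (p q r : nat) : R :=
  sgn_pq up p q * (INR q - INR p) * Rabs (INR q - INR p)
  + sgn_pq up q r * (INR r - INR q) * Rabs (INR r - INR q)
  + sgn_pq up r p * (INR p - INR r) * Rabs (INR p - INR r).

Lemma Rabs_half x : Rabs (x / 2) = Rabs x / 2.
Proof. unfold Rdiv. rewrite Rabs_mult, (Rabs_right (/2)) by lra. reflexivity. Qed.

Lemma tri_area_eq up p q r : tri_area up p q r = - PI / 8 * G up p q r.
Proof.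
  unfold tri_area, G. rewrite !arc_green_eq, !Rabs_half. field.
Qed.

Lemma leftb_iff up p q r : leftb up p q r = true <-> G up p q r < 0.
Proof.
  unfold leftb. rewrite tri_area_eq. pose proof PI_RGT_0.
  destruct (Rlt_dec 0 (- PI / 8 * G up p q r)); split; intro; try discriminate; try easy.
  - nra.
  - exfalso. apply n. nra.
Qed.

Lemma rightb_iff up p q r : rightb up p q r = true <-> 0 < G up p q r.
Proof.
  unfold rightb. rewrite tri_area_eq. pose proof PI_RGT_0.
  destruct (Rlt_dec (- PI / 8 * G up p q r) 0); split; intro; try discriminate; try easy.
  - nra.
  - exfalso. apply n. nra.
Qed.

Lemma es_bound up a b : -1 <= edge_sign up a b <= 1.
Proof. unfold edge_sign. destruct (Nat.eqb b (S a)), (up a b); lra. Qed.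

Lemma es_nonadj up a b : b <> S a -> edge_sign up a b = if up a b then 1 else -1.
Proof. intro H. unfold edge_sign. apply Nat.eqb_neq in H. rewrite H. reflexivity. Qed.

Lemma sgn_lt up p q : (p < q)%nat -> sgn_pq up p q = edge_sign up p q.
Proof. intro. unfold sgn_pq. rewrite Nat.min_l, Nat.max_r by lia. reflexivity. Qed.

Lemma sgn_gt up p q : (q < p)%nat -> sgn_pq up p q = edge_sign up q p.
Proof. intro. unfold sgn_pq. rewrite Nat.min_r, Nat.max_l by lia. reflexivity. Qed.

Lemma G_gt up i j r : (i < j)%nat -> (j < r)%nat ->
  (G up i j r < 0 <-> up i r = true) /\ (0 < G up i j r <-> up i r = false).
Proof.
  intros H1 H2. unfold G.
  rewrite (sgn_lt up i j), (sgn_lt up j r), (sgn_gt up r i) by lia.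
  rewrite (es_nonadj up i r) by lia.
  pose proof (es_bound up i j). pose proof (es_bound up j r).
  apply lt_INR in H1. apply lt_INR in H2.
  rewrite (Rabs_right (INR j - INR i)) by lra.
  rewrite (Rabs_right (INR r - INR j)) by lra.
  rewrite (Rabs_left (INR i - INR r)) by lra.
  set (a := INR j - INR i) in *. set (b := INR r - INR j) in *.
  replace (INR i - INR r) with (-(a+b)) by (unfold a, b; ring).
  assert (0 < a) by (unfold a; lra). assert (0 < b) by (unfold b; lra).
  set (s1 := edge_sign up i j) in *. set (s2 := edge_sign up j r) in *.
  assert (s1 * (a*a) <= a*a) by nra. assert (-(a*a) <= s1 * (a*a)) by nra.
  assert (s2 * (b*b) <= b*b) by nra. assert (-(b*b) <= s2 * (b*b)) by nra.
  destruct (up i r); split; split; intro; try easy; try nra.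
Qed.

Lemma G_lt up i j r : (r < i)%nat -> (i < j)%nat ->
  (G up i j r < 0 <-> up r j = true) /\ (0 < G up i j r <-> up r j = false).
Proof.
  intros H1 H2. unfold G.
  rewrite (sgn_lt up i j), (sgn_gt up j r), (sgn_lt up r i) by lia.
  rewrite (es_nonadj up r j) by lia.
  pose proof (es_bound up i j). pose proof (es_bound up r i).
  apply lt_INR in H1. apply lt_INR in H2.
  rewrite (Rabs_right (INR j - INR i)) by lra.
  rewrite (Rabs_left (INR r - INR j)) by lra.
  rewrite (Rabs_right (INR i - INR r)) by lra.
  set (a := INR j - INR i) in *. set (b := INR i - INR r) in *.
  replace (INR r - INR j) with (-(a+b)) by (unfold a, b; ring).
  assert (0 < a) by (unfold a; lra). assert (0 < b) by (unfold b; lra).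
  set (s1 := edge_sign up i j) in *. set (s2 := edge_sign up r i) in *.
  assert (s1 * (a*a) <= a*a) by nra. assert (-(a*a) <= s1 * (a*a)) by nra.
  assert (s2 * (b*b) <= b*b) by nra. assert (-(b*b) <= s2 * (b*b)) by nra.
  destruct (up r j); split; split; intro; try easy; try nra.
Qed.

Lemma G_mid up i j r : (i < r)%nat -> (r < j)%nat ->
  (G up i j r < 0 <-> up i j = false) /\ (0 < G up i j r <-> up i j = true).
Proof.
  intros H1 H2. unfold G.
  rewrite (sgn_lt up i j), (sgn_gt up j r), (sgn_gt up r i) by lia.
  rewrite (es_nonadj up i j) by lia.
  pose proof (es_bound up r j). pose proof (es_bound up i r).
  apply lt_INR in H1. apply lt_INR in H2.
  rewrite (Rabs_right (INR j - INR i)) by lra.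
  rewrite (Rabs_left (INR r - INR j)) by lra.
  rewrite (Rabs_left (INR i - INR r)) by lra.
  set (a := INR r - INR i) in *. set (b := INR j - INR r) in *.
  replace (INR j - INR i) with (a+b) by (unfold a, b; ring).
  replace (INR r - INR j) with (-b) by (unfold b; ring).
  replace (INR i - INR r) with (-a) by (unfold a; ring).
  assert (0 < a) by (unfold a; lra). assert (0 < b) by (unfold b; lra).
  set (s1 := edge_sign up r j) in *. set (s2 := edge_sign up i r) in *.
  assert (s1 * (b*b) <= b*b) by nra. assert (-(b*b) <= s1 * (b*b)) by nra.
  assert (s2 * (a*a) <= a*a) by nra. assert (-(a*a) <= s2 * (a*a)) by nra.
  destruct (up i j); split; split; intro; try easy; try nra.
Qed.

Lemma len_ext {A} (f g : A -> bool) l :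
  (forall x, In x l -> f x = g x) -> length (filter f l) = length (filter g l).
Proof. intro H. f_equal. apply filter_ext_in. exact H. Qed.

Lemma filter_none {A} (f : A -> bool) l :
  (forall x, In x l -> f x = false) -> filter f l = nil.
Proof.
  induction l as [|a l IH]; intro H; simpl; auto.
  rewrite H by (left; auto). apply IH. intros; apply H; right; auto.
Qed.

Lemma filter_all {A} (f : A -> bool) l :
  (forall x, In x l -> f x = true) -> filter f l = l.
Proof.
  induction l as [|a l IH]; intro H; simpl; auto.
  rewrite H by (left; auto). f_equal. apply IH. intros; apply H; right; auto.
Qed.

Lemma others_split n i j : (1 <= i)%nat -> (i < j)%nat -> (j <= n)%nat ->
  others n i j = seq 1 (i-1) ++ seq (S i) (j - S i) ++ seq (S j) (n-j).
Proof.
  intros H1 H2 H3. unfold others.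
  replace n with ((i-1) + (1 + ((j - S i) + (1 + (n-j)))))%nat at 1 by lia.
  rewrite !seq_app.
  replace (1 + (i-1))%nat with i by lia.
  replace (i + 1 + (j - S i))%nat with j by lia.
  replace (j + 1)%nat with (S j) by lia.
  change (seq i 1) with (i :: nil). change (seq j 1) with (j :: nil).
  replace (i+1)%nat with (S i) by lia.
  rewrite !filter_app.
  assert (E : forall (f : nat -> bool) x, filter f (x :: nil) = if f x then x :: nil else nil) by reflexivity.
  rewrite !E. rewrite Nat.eqb_refl. rewrite Nat.eqb_refl.
  replace (j =? i)%nat with false by (symmetry; apply Nat.eqb_neq; lia).
  simpl negb. cbv iota.
  rewrite Bool.andb_false_r. cbv iota. simpl app.
  rewrite (filter_all _ (seq 1 (i-1))), (filter_all _ (seq (S i) (j - S i))),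
    (filter_all _ (seq (S j) (n-j))); auto;
  intros x Hx; apply in_seq in Hx;
  apply andb_true_intro; split; apply Bool.negb_true_iff; apply Nat.eqb_neq; lia.
Qed.

Lemma bool_iff (a b : bool) : (a = true <-> b = true) -> a = b.
Proof. destruct a, b; intuition. Qed.

Theorem lemma3 (n : nat) (up : nat -> nat -> bool) :
  up 1%nat n = true ->
  forall i j : nat, (1 <= i)%nat -> (i < j)%nat -> (j <= n)%nat ->
  is_k_edge up n (same_color_count up n i j) i j.
Proof.
  intros _ i j H1 H2 H3.
  unfold is_k_edge, same_color_count.
  rewrite others_split by assumption.
  rewrite !filter_app, !length_app.
  assert (Bhi : forall j', In j' (seq (S j) (n-j)) -> blue up i j' = up i j').
  { intros j' Hj. apply in_seq in Hj. unfold blue.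
    replace (j' =? S i)%nat with false by (symmetry; apply Nat.eqb_neq; lia). reflexivity. }
  assert (Blo : forall i', In i' (seq 1 (i-1)) -> blue up i' j = up i' j).
  { intros i' Hi. apply in_seq in Hi. unfold blue.
    replace (j =? S i')%nat with false by (symmetry; apply Nat.eqb_neq; lia). reflexivity. }
  destruct (blue up i j) eqn:Hb; [left | right].
  - rewrite (filter_none (leftb up i j) (seq (S i) (j - S i))).
    2:{ intros r Hr. apply in_seq in Hr.
        assert (up i j = true).
        { unfold blue in Hb. replace (j =? S i)%nat with false in Hb
            by (symmetry; apply Nat.eqb_neq; lia). exact Hb. }
        destruct (leftb up i j r) eqn:E; auto.
        apply leftb_iff in E. apply (G_mid up i j r) in E; lia || congruence. }
    rewrite (len_ext (leftb up i j) (fun r => up r j) (seq 1 (i-1))).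
    2:{ intros r Hr. apply in_seq in Hr. apply bool_iff.
        rewrite leftb_iff. apply G_lt; lia. }
    rewrite (len_ext (leftb up i j) (fun r => up i r) (seq (S j) (n-j))).
    2:{ intros r Hr. apply in_seq in Hr. apply bool_iff.
        rewrite leftb_iff. apply G_gt; lia. }
    rewrite (len_ext (fun j' => Bool.eqb (blue up i j') true) (fun r => up i r) (seq (S j) (n-j))).
    2:{ intros r Hr. rewrite Bhi by assumption. destruct (up i r); reflexivity. }
    rewrite (len_ext (fun i' => Bool.eqb (blue up i' j) true) (fun r => up r j) (seq 1 (i-1))).
    2:{ intros r Hr. rewrite Blo by assumption. destruct (up r j); reflexivity. }
    simpl. lia.
  - assert (Hij : up i j = false /\ j <> S i).
    { unfold blue in Hb. apply Bool.orb_false_iff in Hb. destruct Hb.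
      split; auto. apply Nat.eqb_neq; auto. }
    destruct Hij as [Hu Hne].
    rewrite (filter_none (rightb up i j) (seq (S i) (j - S i))).
    2:{ intros r Hr. apply in_seq in Hr.
        destruct (rightb up i j r) eqn:E; auto.
        apply rightb_iff in E. apply (G_mid up i j r) in E; lia || congruence. }
    rewrite (len_ext (rightb up i j) (fun r => negb (up r j)) (seq 1 (i-1))).
    2:{ intros r Hr. apply in_seq in Hr. apply bool_iff.
        rewrite rightb_iff, Bool.negb_true_iff. apply G_lt; lia. }
    rewrite (len_ext (rightb up i j) (fun r => negb (up i r)) (seq (S j) (n-j))).
    2:{ intros r Hr. apply in_seq in Hr. apply bool_iff.
        rewrite rightb_iff, Bool.negb_true_iff. apply G_gt; lia. }
    rewrite (len_ext (fun j' => Bool.eqb (blue up i j') false) (fun r => negb (up i r)) (seq (S j) (n-j))).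
    2:{ intros r Hr. rewrite Bhi by assumption. destruct (up i r); reflexivity. }
    rewrite (len_ext (fun i' => Bool.eqb (blue up i' j) false) (fun r => negb (up r j)) (seq 1 (i-1))).
    2:{ intros r Hr. rewrite Blo by assumption. destruct (up r j); reflexivity. }
    simpl. lia.
Qed.
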